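(* The relations ${\rm Abv}(x,y,z):=(y<x\wedge xy\bot z)\vee(z<x\wedge xz\bot y)$ and $U(x,y,z):=(y<x\vee z<x)\wedge(y\bot z)$ are primitive positive definable in $(P;{\rm Low})$.
   Context: $(P;\leq)$ is the random partial order (Fraïssé limit of all finite partial orders); $x<y$ means $x\leq y\wedge x\neq y$; $x\bot y$ means $x,y$ incomparable; $xy\bot z$ abbreviates $x\bot z\wedge y\bot z$, and $z\bot xy$ likewise. ${\rm Low}(x,y,z):=(x<y\wedge z\bot xy)\vee(x<z\wedge y\bot xz)$. Primitive positive definable means definable by a formula $\exists\bar y(\psi_1\wedge\cdots\wedge\psi_m)$ with atomic $\psi_i$ (including equalities). *)

(* Defs.v *)
From mathcomp Require Import all_boot.
Set Implicit Arguments. Unset Strict Implicit. Unset Printing Implicit Defensive.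

Section Posets.
Variables (T : Type) (le : T -> T -> Prop).

Definition is_partial_order : Prop :=
  (forall x, le x x) /\
  (forall x y, le x y -> le y x -> x = y) /\
  (forall x y z, le x y -> le y z -> le x z).

Definition plt (x y : T) : Prop := le x y /\ x <> y.
Definition pinc (x y : T) : Prop := ~ le x y /\ ~ le y x.

Definition Low (x y z : T) : Prop :=
  (plt x y /\ pinc z x /\ pinc z y) \/ (plt x z /\ pinc y x /\ pinc y z).

Definition Abv (x y z : T) : Prop :=
  (plt y x /\ pinc x z /\ pinc y z) \/ (plt z x /\ pinc x y /\ pinc z y).

Definition Urel (x y z : T) : Prop :=
  (plt y x \/ plt z x) /\ pinc y z.

Definition countable_type : Prop :=
  exists f : T -> nat, injective f.

Definition embeds_all_finite_posets : Prop :=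
  forall (n : nat) (r : 'I_n -> 'I_n -> Prop),
    (forall i, r i i) ->
    (forall i j, r i j -> r j i -> i = j) ->
    (forall i j k, r i j -> r j k -> r i k) ->
    exists f : 'I_n -> T, injective f /\ forall i j, r i j <-> le (f i) (f j).

(* every isomorphism between finite substructures extends to an automorphism;
   a finite partial isomorphism is given by two injective enumerations g, h
   of its domain and image with g i |-> h i *)
Definition ultrahomogeneous : Prop :=
  forall (n : nat) (g h : 'I_n -> T),
    injective g -> injective h ->
    (forall i j, le (g i) (g j) <-> le (h i) (h j)) ->
    exists (s s' : T -> T),
      cancel s s' /\ cancel s' s /\
      (forall x y, le x y <-> le (s x) (s y)) /\
      (forall i, s (g i) = h i).

Definition random_poset : Prop :=
  is_partial_order /\ countable_type /\ embeds_all_finite_posets /\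
  ultrahomogeneous.

(* Primitive positive formulas over the signature {Low} (with equality).
   Variables are indexed by nat: 0,1,2 are the free variables x,y,z,
   all other variables are existentially quantified. *)
Inductive pp_atom : Type :=
| AEq : nat -> nat -> pp_atom
| ALow : nat -> nat -> nat -> pp_atom.

Definition atom_holds (v : nat -> T) (a : pp_atom) : Prop :=
  match a with
  | AEq i j => v i = v j
  | ALow i j k => Low (v i) (v j) (v k)
  end.

Fixpoint all_atoms_hold (v : nat -> T) (l : seq pp_atom) : Prop :=
  match l with
  | [::] => True
  | a :: l' => atom_holds v a /\ all_atoms_hold v l'
  end.

Definition pp_definable_Low (R : T -> T -> T -> Prop) : Prop :=
  exists atoms : seq pp_atom,
    forall x y z : T,
      R x y z <->
      exists v : nat -> T,
        v 0 = x /\ v 1 = y /\ v 2 = z /\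
        all_atoms_hold v atoms.

End Posets.

(* Main.v *)
Require Import Defs.
From Stdlib Require Import Classical_Prop.
From mathcomp Require Import all_boot.

Lemma ext_gen (T : Type) (le : T -> T -> Prop) (HP : random_poset le)
  (x0 : T) (l : seq T) (D U : T -> Prop) :
  (forall i j, i < size l -> j < size l -> nth x0 l i = nth x0 l j -> i = j) ->
  (forall p q, le p q -> D q -> D p) -> (forall p q, le p q -> U p -> U q) ->
  (forall p q, D p -> U q -> le p q) -> (forall p, D p -> U p -> False) ->
  exists w, forall k, k < size l ->
    (le (nth x0 l k) w <-> D (nth x0 l k)) /\ (le w (nth x0 l k) <-> U (nth x0 l k)).
Proof.
move=> Hd HD HU HDU HDU0.
case: HP => [[Hr [Ha Ht]] [_ [Hemb Hhom]]].
set n := size l.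
pose gn k := nth x0 l k.
pose R (i j : 'I_n.+1) : Prop :=
  if (i < n) then (if (j < n) then le (gn i) (gn j) else D (gn i))
  else (if (j < n) then U (gn j) else True).
have eqn : forall i : 'I_n.+1, ~~ (i < n) -> val i = n.
  move=> i; rewrite -leqNgt => H; apply/eqP; rewrite eqn_leq H andbT.
  by rewrite -ltnS ltn_ord.
have [f [finj fR]] : exists f : 'I_n.+1 -> T, injective f /\ forall i j, R i j <-> le (f i) (f j).
  apply: Hemb.
  - by move=> i; rewrite /R; case: (i < n).
  - move=> i j; rewrite /R.
    case: ifP => hi; case: ifP => hj.
    + move=> H1 H2; apply/val_inj/(Hd _ _ hi hj); exact: Ha.
    + move=> H1 H2; exfalso; exact: (HDU0 _ H1 H2).
    + move=> H1 H2; exfalso; exact: (HDU0 _ H2 H1).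
    + move=> _ _; apply/val_inj; rewrite /= (eqn i) ?hi // (eqn j) ?hj //.
  - move=> i j k; rewrite /R.
    case: ifP => hi; case: ifP => hj; case: ifP => hk.
    + exact: Ht.
    + move=> H1 H2; exact: (HD _ _ H1 H2).
    + move=> H1 H2; exact: (HDU _ _ H1 H2).
    + move=> H1 H2; exact: H1.
    + move=> H1 H2; exact: (HU _ _ H2 H1).
    + move=> _ H2; exact: I.
    + move=> H1 H2; exact: H2.
    + move=> _ _; exact: I.
have hord : forall i j : 'I_n, le (f (widen_ord (leqnSn n) i)) (f (widen_ord (leqnSn n) j)) <-> le (gn i) (gn j).
  move=> i j; have := fR (widen_ord (leqnSn n) i) (widen_ord (leqnSn n) j).
  rewrite /R /= !ltn_ord => H; exact: iff_sym H.
have [s [s' [ss' [s's [sle sg]]]]] :=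
  Hhom n (fun i : 'I_n => f (widen_ord (leqnSn n) i)) (fun i : 'I_n => gn i)
    (fun i j E => val_inj (f_equal val (finj _ _ E) : val i = val j))
    (fun i j E => val_inj (Hd _ _ (ltn_ord i) (ltn_ord j) E))
    hord.
exists (s (f ord_max)) => k hk.
have E : nth x0 l k = s (f (widen_ord (leqnSn n) (Ordinal hk))) by rewrite sg.
have F1 := fR (widen_ord (leqnSn n) (Ordinal hk)) ord_max.
have F2 := fR ord_max (widen_ord (leqnSn n) (Ordinal hk)).
move: F1 F2; rewrite /R /= hk ltnn => F1 F2.
have S1 := sle (f (widen_ord (leqnSn n) (Ordinal hk))) (f ord_max).
have S2 := sle (f ord_max) (f (widen_ord (leqnSn n) (Ordinal hk))).
rewrite -E in S1 S2.
rewrite /gn in F1 F2.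
split.
- exact: (iff_trans (iff_sym S1) (iff_sym F1)).
- exact: (iff_trans (iff_sym S2) (iff_sym F2)).
Qed.

Lemma ext3 (T : Type) (le : T -> T -> Prop) (HP : random_poset le)
  (p1 p2 p3 : T) (D U : T -> Prop) :
  p1 <> p2 -> p1 <> p3 -> p2 <> p3 ->
  (forall p q, le p q -> D q -> D p) -> (forall p q, le p q -> U p -> U q) ->
  (forall p q, D p -> U q -> le p q) -> (forall p, D p -> U p -> False) ->
  exists w, ((le p1 w <-> D p1) /\ (le w p1 <-> U p1)) /\
            ((le p2 w <-> D p2) /\ (le w p2 <-> U p2)) /\
            ((le p3 w <-> D p3) /\ (le w p3 <-> U p3)).
Proof.
move=> h12 h13 h23 HD HU HDU HDU0.
have Hd : forall i j, i < size [:: p1; p2; p3] -> j < size [:: p1; p2; p3] ->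
   nth p1 [:: p1; p2; p3] i = nth p1 [:: p1; p2; p3] j -> i = j.
  move=> [|[|[|i]]] [|[|[|j]]] //= _ _ E; exfalso; congruence.
have [w Hw] := @ext_gen T le HP p1 [:: p1; p2; p3] D U Hd HD HU HDU HDU0.
exists w; split; [exact: (Hw 0 isT) | split; [exact: (Hw 1 isT) | exact: (Hw 2 isT)]].
Qed.

Lemma po_facts (T : Type) (le : T -> T -> Prop) (HP : random_poset le) :
  (forall x, le x x) /\ (forall x y, le x y -> le y x -> x = y) /\
  (forall x y z, le x y -> le y z -> le x z).
Proof. by case: HP. Qed.

Lemma up3 (T : Type) (le : T -> T -> Prop) (HP : random_poset le) (p1 p2 p3 d : T) :
  p1 <> p2 -> p1 <> p3 -> p2 <> p3 ->
  exists w, ((le p1 w <-> le p1 d) /\ ~ le w p1) /\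
            ((le p2 w <-> le p2 d) /\ ~ le w p2) /\
            ((le p3 w <-> le p3 d) /\ ~ le w p3).
Proof.
have [Hr [Ha Ht]] := @po_facts T le HP.
move=> h12 h13 h23.
have [w [[A1 B1] [[A2 B2] [A3 B3]]]] := @ext3 T le HP p1 p2 p3 (fun p => le p d) (fun _ => False) h12 h13 h23
  (fun p q pq qd => Ht _ _ _ pq qd) (fun _ _ _ f => f) (fun _ _ _ f => match f with end)
  (fun _ _ f => f).
exists w; split; [split; [exact A1| by move/B1] | split; [split; [exact A2|by move/B2]|split; [exact A3|by move/B3]]].
Qed.

Lemma down3 (T : Type) (le : T -> T -> Prop) (HP : random_poset le) (p1 p2 p3 e : T) :
  p1 <> p2 -> p1 <> p3 -> p2 <> p3 ->
  exists w, ((le w p1 <-> le e p1) /\ ~ le p1 w) /\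
            ((le w p2 <-> le e p2) /\ ~ le p2 w) /\
            ((le w p3 <-> le e p3) /\ ~ le p3 w).
Proof.
have [Hr [Ha Ht]] := @po_facts T le HP.
move=> h12 h13 h23.
have [w [[A1 B1] [[A2 B2] [A3 B3]]]] := @ext3 T le HP p1 p2 p3 (fun _ => False) (fun p => le e p) h12 h13 h23
  (fun _ _ _ f => f) (fun p q pq ep => Ht _ _ _ ep pq) (fun _ _ f => match f with end)
  (fun _ f _ => f).
exists w; split; [split; [exact B1| by move/A1] | split; [split; [exact B2|by move/A2]|split; [exact B3|by move/A3]]].
Qed.

Lemma free3 (T : Type) (le : T -> T -> Prop) (HP : random_poset le) (p1 p2 p3 : T) :
  p1 <> p2 -> p1 <> p3 -> p2 <> p3 ->
  exists w, (~ le p1 w /\ ~ le w p1) /\ (~ le p2 w /\ ~ le w p2) /\ (~ le p3 w /\ ~ le w p3).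
Proof.
move=> h12 h13 h23.
have [w [[A1 B1] [[A2 B2] [A3 B3]]]] := @ext3 T le HP p1 p2 p3 (fun _ => False) (fun _ => False) h12 h13 h23
  (fun _ _ _ f => f) (fun _ _ _ f => f) (fun _ _ f => match f with end) (fun _ f _ => f).
exists w; do !split; by [move/A1|move/B1|move/A2|move/B2|move/A3|move/B3].
Qed.

Lemma U_back (T : Type) (le : T -> T -> Prop) (HP : random_poset le) (x y z t a u : T) :
  Low le y x t -> Low le z x t -> Low le a y z -> Low le u t a ->
  (plt le y x \/ plt le z x) /\ pinc le y z.
Proof.
have [Hr [Ha Ht]] := @po_facts T le HP.
rewrite /Low /plt /pinc.
move=> H1 H2 H3 H4.
have Hyz : ~ le y z /\ ~ le z y by case: H3 => [[_ [[? ?] [? ?]]]|[_ [[? ?] [? ?]]]]; split.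
split=> //.
have Hat : ~ le a t by case: H4 => [[_ [[? ?] [? ?]]]|[_ [[? ?] [? ?]]]].
case: H1 => [[Hyx _]|[[Hyt _] _]]; first by left.
case: H2 => [[Hzx _]|[[Hzt _] _]]; first by right.
exfalso; apply: Hat.
case: H3 => [[[Hay _] _]|[[Haz _] _]]; [exact: Ht Hay Hyt | exact: Ht Haz Hzt].
Qed.

Lemma Abv_back (T : Type) (le : T -> T -> Prop) (HP : random_poset le) (x y z a v : T) :
  (plt le y x \/ plt le z x) -> pinc le y z -> Low le a y z -> Low le v x a ->
  Abv le x y z.
Proof.
have [Hr [Ha Ht]] := @po_facts T le HP.
rewrite /Abv /Low /plt /pinc.
move=> H [Hyz Hzy] H3 H4.
have Hax : ~ le a x by case: H4 => [[_ [[? ?] [? ?]]]|[_ [[? ?] [? ?]]]].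
have Hb : ~ (le y x /\ le z x).
  move=> [Hyx Hzx]; apply: Hax.
  case: H3 => [[[Hay _] _]|[[Haz _] _]]; [exact: Ht Hay Hyx | exact: Ht Haz Hzx].
case: H => [[Hyx Hne]|[Hzx Hne]].
- left; do !split => //.
  + by move=> Hxz; apply: Hyz; exact: Ht Hyx Hxz.
  + by move=> Hzx; apply: Hb.
- right; do !split => //.
  + by move=> Hxy; apply: Hzy; exact: Ht Hzx Hxy.
  + by move=> Hyx; apply: Hb.
Qed.

Lemma U_fwd (T : Type) (le : T -> T -> Prop) (HP : random_poset le) (x y z : T) :
  Urel le x y z -> exists t a u,
  Low le y x t /\ Low le z x t /\ Low le a y z /\ Low le u t a.
Proof.
have [Hr [Ha Ht]] := @po_facts T le HP.
rewrite /Urel /Low /plt /pinc.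
move=> [H [Hyz Hzy]].
have Nyz : y <> z by move=> E; subst; apply: Hyz; exact: Hr.
(* the final two witnesses, given t with ~ le y t /\ ~ le t y, ~le t z *)
have fin : forall t, (t <> y) -> (t <> z) -> forall e, (e = y \/ e = z) ->
   ~ le e t -> ~ le t e ->
   exists a u, ((le a y /\ a <> y) /\ ~ le z a /\ ~ le a z \/ (le a z /\ a <> z) /\ ~ le y a /\ ~ le a y)
       /\ (e = y -> le a y /\ a <> y /\ ~ le z a /\ ~ le a z)
       /\ (e = z -> le a z /\ a <> z /\ ~ le y a /\ ~ le a y)
       /\ ((le u t /\ u <> t) /\ (~ le a u /\ ~ le u a) /\ (~ le a t /\ ~ le t a)).
  move=> t Nty Ntz e He Het Hte.
  have [a [[A1 B1] [[A2 B2] [A3 B3]]]] := @down3 T le HP y z t e Nyz (nesym Nty) (nesym Ntz).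
  have Nat : a <> t by move=> E; subst; apply: B3; exact: Hr.
  have [u [[C1 D1] [[C2 D2] [C3 D3]]]] := @down3 T le HP t a y t (nesym Nat) Nty
     (fun E => ltac:(subst; apply: B1; exact: Hr)).
  have Hat : ~ le a t by move/A3.
  have Nut : u <> t by move=> E; subst; apply: D1; exact: Hr.
  have Hua : ~ le u a by move/C2.
  have Pu : (le u t /\ u <> t) /\ (~ le a u /\ ~ le u a) /\ (~ le a t /\ ~ le t a).
    by do !split => //; apply/C1; exact: Hr.
  case: He => Ee; subst e.
  - have Py : le a y /\ a <> y /\ ~ le z a /\ ~ le a z.
      split; [apply/A1; exact: Hr|]; split; [by move=> E; subst; apply: B1; exact: Hr|].
      by split=> //; move/A2.
    exists a, u; split; [by left; case: Py => [? [? [? ?]]]|].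
    split; [by []|]; split=> //; move=> E; subst; exfalso; exact: Nyz.
  - have Pz : le a z /\ a <> z /\ ~ le y a /\ ~ le a y.
      split; [apply/A2; exact: Hr|]; split; [by move=> E; subst; apply: B2; exact: Hr|].
      by split=> //; move/A1.
    exists a, u; split; [by right; case: Pz => [? [? [? ?]]]|].
    split; [|by []]; move=> E; subst; exfalso; exact: Nyz.
have Hry := Hr y; have Hrz := Hr z; have Hrx := Hr x.
case: (Classical_Prop.classic (le y x)) => Lyx; case: (Classical_Prop.classic (le z x)) => Lzx.
- have Nyx : y <> x by move=> E; subst; exact: Hzy Lzx.
  have Nzx : z <> x by move=> E; subst; exact: Hyz Lyx.
  have [t [[A1 B1] [[A2 B2] [A3 B3]]]] := @free3 T le HP x y z (nesym Nyx) (nesym Nzx) Nyz.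
  have Nty : t <> y by move=> E; subst; exact: A2 Hry.
  have Ntz : t <> z by move=> E; subst; exact: A3 Hrz.
  have [a [u [F1 [F2 [F3 F4]]]]] := fin t Nty Ntz y (or_introl erefl) A2 B2.
  have F5 := F2 erefl.
  have := nesym Ntz; have := nesym Nty; exists t, a, u; tauto.
- have Nyx : y <> x by case: H => [[_ ?]|[? _]] //.
  have Nxz : ~ le x z by move=> L; apply: Hyz; exact: Ht Lyx L.
  have [t [[A1 B1] [[A2 B2] [A3 B3]]]] := @up3 T le HP x y z z (nesym Nyx) (fun E => ltac:(subst; exact: Nxz Hrz)) Nyz.
  have Nty : t <> y by move=> E; subst; exact: B2 Hry.
  have Ntz : t <> z by move=> E; subst; exact: B3 Hrz.
  have Lyt : ~ le y t by move/A2.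
  have Lzt : le z t by apply/A3.
  have Lxt : ~ le x t by move/A1.
  have [a [u [F1 [F2 [F3 F4]]]]] := fin t Nty Ntz y (or_introl erefl) Lyt B2.
  have F5 := F2 erefl.
  have := nesym Ntz; have := nesym Nty; exists t, a, u; tauto.
- have Nzx : z <> x by case: H => [[? _]|[_ ?]] //.
  have Nxy : ~ le x y by move=> L; apply: Hzy; exact: Ht Lzx L.
  have [t [[A1 B1] [[A2 B2] [A3 B3]]]] := @up3 T le HP x y z y (fun E => ltac:(subst; exact: Nxy Hry)) (nesym Nzx) Nyz.
  have Nty : t <> y by move=> E; subst; exact: B2 Hry.
  have Ntz : t <> z by move=> E; subst; exact: B3 Hrz.
  have Lzt : ~ le z t by move/A3.
  have Lyt : le y t by apply/A2.
  have Lxt : ~ le x t by move/A1.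
  have [a [u [F1 [F2 [F3 F4]]]]] := fin t Nty Ntz z (or_intror erefl) Lzt B3.
  have F5 := F3 erefl.
  have := nesym Ntz; have := nesym Nty; exists t, a, u; tauto.
- by exfalso; case: H => [[? _]|[? _]].
Qed.

Lemma Abv_fwd (T : Type) (le : T -> T -> Prop) (HP : random_poset le) (x y z : T) :
  Abv le x y z -> exists t a u a' v,
  Low le y x t /\ Low le z x t /\ Low le a y z /\ Low le u t a /\
  Low le a' y z /\ Low le v x a'.
Proof.
have [Hr [Ha Ht]] := @po_facts T le HP.
move=> H.
have HU : Urel le x y z.
  by rewrite /Urel; case: H => [[? [? ?]]|[? [? [? ?]]]]; [split; [left|]|split; [right|]].
have [t [a [u [U1 [U2 [U3 U4]]]]]] := @U_fwd T le HP x y z HU.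
exists t, a, u.
suff [a' [v [V1 V2]]] : exists a' v, Low le a' y z /\ Low le v x a'.
  by exists a', v.
have Hry := Hr y; have Hrz := Hr z; have Hrx := Hr x.
move: H; rewrite /Abv /Low /plt /pinc.
case=> [[[Lyx Nyx] [[Nxz Nzx] [Nyz Nzy]]]|[[Lzx Nzx] [[Nxy Nyx] [Nzy Nyz]]]].
- have Exz : x <> z by move=> E; subst; exact: Nxz Hrz.
  have Eyz : y <> z by move=> E; subst; exact: Nyz Hrz.
  have [a' [[A1 B1] [[A2 B2] [A3 B3]]]] := @down3 T le HP x y z z (nesym Nyx) Exz Eyz.
  have Exa : x <> a' by move=> E; subst; exact: B1 Hrx.
  have Eya : a' <> y by move=> E; subst; exact: B2 Hry.
  have Eza : a' <> z by move=> E; subst; exact: B3 Hrz.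
  have [v [[C1 D1] [[C2 D2] [C3 D3]]]] := @down3 T le HP x a' y x Exa (nesym Nyx) Eya.
  have Evx : v <> x by move=> E; subst; exact: D1 Hrx.
  have L1 : le a' z by apply/A3.
  have L2 : ~ le a' x by move/A1.
  have L3 : ~ le a' y by move/A2.
  have L4 : le v x by apply/C1.
  have L5 : ~ le v a' by move/C2.
  exists a', v; tauto.
- have Exy : x <> y by move=> E; subst; exact: Nxy Hry.
  have Eyz : y <> z by move=> E; subst; exact: Nzy Hrz.
  have [a' [[A1 B1] [[A2 B2] [A3 B3]]]] := @down3 T le HP x y z y Exy (nesym Nzx) Eyz.
  have Exa : x <> a' by move=> E; subst; exact: B1 Hrx.
  have Eya : a' <> y by move=> E; subst; exact: B2 Hry.
  have Eza : a' <> z by move=> E; subst; exact: B3 Hrz.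
  have [v [[C1 D1] [[C2 D2] [C3 D3]]]] := @down3 T le HP x a' y x Exa Exy Eya.
  have Evx : v <> x by move=> E; subst; exact: D1 Hrx.
  have L1 : le a' y by apply/A2.
  have L2 : ~ le a' x by move/A1.
  have L3 : ~ le a' z by move/A3.
  have L4 : le v x by apply/C1.
  have L5 : ~ le v a' by move/C2.
  exists a', v; tauto.
Qed.

Theorem lemma43 (T : Type) (le : T -> T -> Prop) (HP : random_poset le) :
  pp_definable_Low le (Abv le) /\ pp_definable_Low le (Urel le).
Proof.
split.
- exists [:: ALow 1 0 3; ALow 2 0 3; ALow 4 1 2; ALow 5 3 4; ALow 6 1 2; ALow 7 0 6].
  move=> x y z; split.
  + move=> H; have [t [a [u [a' [v [H1 [H2 [H3 [H4 [H5 H6]]]]]]]]]] := @Abv_fwd T le HP x y z H.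
    exists (fun n => match n with 0 => x | 1 => y | 2 => z | 3 => t | 4 => a | 5 => u | 6 => a' | _ => v end).
    by do !split.
  + move=> [w [<- [<- [<- /= [H1 [H2 [H3 [H4 [H5 [H6 _]]]]]]]]]].
    have [Hu Hyz] := @U_back T le HP _ _ _ _ _ _ H1 H2 H3 H4.
    exact: (@Abv_back T le HP _ _ _ _ _ Hu Hyz H5 H6).
- exists [:: ALow 1 0 3; ALow 2 0 3; ALow 4 1 2; ALow 5 3 4].
  move=> x y z; split.
  + move=> H; have [t [a [u [H1 [H2 [H3 H4]]]]]] := @U_fwd T le HP x y z H.
    exists (fun n => match n with 0 => x | 1 => y | 2 => z | 3 => t | 4 => a | _ => u end).
    by do !split.
  + move=> [w [<- [<- [<- /= [H1 [H2 [H3 [H4 _]]]]]]]].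
    exact: (@U_back T le HP _ _ _ _ _ _ H1 H2 H3 H4).
Qed.
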